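(* Let $p$ be a prime, $n\ge2$, $1\le m\le n-1$, $\beta>0$, and let $G\subset G(n,n-m)$ with $|G|\gtrsim p^{\beta}$. Let $E\subset\mathbb{F}_p^n$. (1) If for every $\xi\in\mathbb{F}_p^n\setminus\{0\}$ we have $|\{W\in G:\ \xi\in W\}|\lesssim |G|p^{-\beta}$, then $\mathcal{E}(E,G')\lesssim |E||G|+|E|^2|G|p^{-\beta}$. (2) If for every $\xi\in\mathbb{F}_p^n\setminus\{0\}$ we have $|\{W\in G:\ \xi\in Per(W)\}|\lesssim |G|p^{-\beta}$, then $\mathcal{E}(E,G')\lesssim p^{-m}|G|\,(|E|^2+|E|p^{n-\beta})$.
   Context: $\mathbb{F}_p$ is the field with $p$ elements; $G(n,k)$ is the set of $k$-dimensional linear subspaces of $\mathbb{F}_p^n$. For $W\in G(n,n-m)$, $W$ has exactly $p^m$ cosets $x_{W,j}+W$, $1\le j\le p^m$. For $G\subset G(n,n-m)$, $G'$ denotes the collection of all cosets of all $W\in G$, i.e. $G'=\{x_{W,j}+W:\ W\in G,\ 1\le j\le p^m\}$. For a collection $\mathcal{A}$ of affine subspaces and $E\subset\mathbb{F}_p^n$, the energy is $\mathcal{E}(E,\mathcal{A})=\sum_{V\in\mathcal{A}}|E\cap V|^2$. For a subspace $W$, $Per(W)=\{x\in\mathbb{F}_p^n:\ x\cdot w=0\ \text{for all } w\in W\}$, where $x\cdot w=\sum_i x_iw_i$. $|J|$ denotes cardinality. $f\lesssim g$ means $f\le Cg$ with $C$ independent of $p$ and $E$; the implied constants in the conclusions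 depend on those in the hypotheses. *)

(* Defs.v *)
From mathcomp Require Import all_boot all_order all_algebra.


Set Implicit Arguments.
Unset Strict Implicit.
Unset Printing Implicit Defensive.

Import GRing.Theory.
Local Open Scope ring_scope.

Definition dotv (F : fieldType) (n : nat) (x w : 'rV[F]_n) : F :=
  \sum_(i < n) x 0 i * w 0 i.

Definition Per (F : finFieldType) (n : nat) (W : {vspace 'rV[F]_n}) :
  {set 'rV[F]_n} :=
  [set x | [forall w : 'rV[F]_n, (w \in W) ==> (dotv x w == 0)]].

Definition coset (F : finFieldType) (n : nat) (W : {vspace 'rV[F]_n})
  (x : 'rV[F]_n) : {set 'rV[F]_n} :=
  [set y | (y - x) \in W].

Definition cosets_coll (F : finFieldType) (n : nat)
  (G : seq {vspace 'rV[F]_n}) : {set {set 'rV[F]_n}} :=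
  \bigcup_(W <- G) [set coset W x | x : 'rV[F]_n].

Definition energy (T : finType) (E : {set T}) (A : {set {set T}}) : nat :=
  (\sum_(V in A) #|E :&: V| ^ 2)%N.

(* Main.v *)
Require Import Defs.
From mathcomp Require Import all_boot all_order all_algebra.
From mathcomp Require Import zify.

Set Implicit Arguments.
Unset Strict Implicit.
Unset Printing Implicit Defensive.
Import GRing.Theory.
Local Open Scope ring_scope.


Lemma dotvDl (F : fieldType) n (x y w : 'rV[F]_n) :
  dotv (x + y) w = dotv x w + dotv y w.
Proof. by rewrite /dotv -big_split; apply: eq_bigr => i _; rewrite !mxE mulrDl. Qed.

Lemma dotvZl (F : fieldType) n (a : F) (x w : 'rV[F]_n) :
  dotv (a *: x) w = a * dotv x w.
Proof. by rewrite /dotv big_distrr; apply: eq_bigr => i _; rewrite !mxE -mulrA. Qed.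

Lemma dotvBl (F : fieldType) n (x y w : 'rV[F]_n) :
  dotv (x - y) w = dotv x w - dotv y w.
Proof. by rewrite /dotv -sumrB; apply: eq_bigr => i _; rewrite !mxE mulrBl. Qed.

Lemma dotvBr (F : fieldType) n (x y w : 'rV[F]_n) :
  dotv w (x - y) = dotv w x - dotv w y.
Proof. by rewrite /dotv -sumrB; apply: eq_bigr => i _; rewrite !mxE mulrBr. Qed.

Lemma dotv0l (F : fieldType) n (w : 'rV[F]_n) : dotv 0 w = 0.
Proof. by rewrite /dotv big1 // => i _; rewrite mxE mul0r. Qed.

Lemma dotv_sumr (F : fieldType) n k (x : 'rV[F]_n) (c : 'I_k -> F) (b : 'I_k -> 'rV[F]_n) :
  dotv x (\sum_i c i *: b i) = \sum_i c i * dotv x (b i).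
Proof.
rewrite /dotv.
under eq_bigr do rewrite summxE big_distrr.
rewrite exchange_big; apply: eq_bigr => j _; rewrite big_distrr.
by apply: eq_bigr => i _; rewrite !mxE /= mulrCA.
Qed.

Lemma PerP (F : finFieldType) n (W : {vspace 'rV[F]_n}) xi :
  reflect (forall w, w \in W -> dotv xi w = 0) (xi \in Per W).
Proof.
rewrite inE; apply: (iffP forallP) => H w.
  by move=> wW; apply/eqP; move/implyP: (H w); apply.
by apply/implyP => /H ->.
Qed.

Lemma card_le_ker (F : finFieldType) n (U : finType) (S K : {set 'rV[F]_n})
  (f : 'rV[F]_n -> U) :
  (forall x y, x \in S -> y \in S -> f x = f y -> x - y \in K) ->
  (#|S| <= #|U| * #|K|)%N.
Proof.
move=> H.
pose rep u := odflt 0 [pick y in S | f y == u].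
have Hrep x : x \in S -> rep (f x) \in S /\ f (rep (f x)) = f x.
  move=> xS; rewrite /rep; case: pickP => [y /andP[yS /eqP fy]|/(_ x)] //.
  by rewrite xS eqxx.
pose g x := (f x, x - rep (f x)).
have ginj : {in S &, injective g}.
  move=> x y xS yS [e1 e2]; rewrite e1 in e2.
  by apply: (addIr (- rep (f y))).
rewrite -(card_in_imset ginj) -cardsT -cardsX.
apply: subset_leq_card; apply/subsetP => _ /imsetP[x xS ->].
have [r1 r2] := Hrep x xS.
by rewrite inE /= in_setT /=; apply: H => //; rewrite r2.
Qed.

Lemma card_Per_ge (F : finFieldType) n (W : {vspace 'rV[F]_n}) :
  (#|F| ^ n <= #|F| ^ (\dim W) * #|Per W|)%N.
Proof.
have -> : (#|F| ^ n = #|[set: 'rV[F]_n]|)%N by rewrite cardsT card_mx mul1n.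
have -> : (#|F| ^ (\dim W) = #|{: 'rV[F]_(\dim W)}|)%N by rewrite card_mx mul1n.
apply: (card_le_ker (f := fun x => \row_(i < \dim W) dotv x (vbasis W)`_i)).
move=> x y _ _ e; apply/PerP => w wW.
rewrite dotvBl (coord_vbasis wW) !dotv_sumr; apply/eqP; rewrite subr_eq0; apply/eqP.
apply: eq_bigr => i _; congr (_ * _).
by have := congr1 (fun M : 'rV_(\dim W) => M 0 i) e; rewrite /= !mxE.
Qed.

Lemma card_Per_split (F : finFieldType) n (W : {vspace 'rV[F]_n}) z :
  (#|Per W| <= #|F| * #|[set xi in Per W | dotv xi z == 0%R]|)%N.
Proof.
apply: (card_le_ker (f := fun xi => dotv xi z)) => x y xP yP e.
rewrite inE dotvBl e subrr eqxx andbT.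
apply/PerP => w wW; rewrite dotvBl.
by move/PerP: xP => xP; move/PerP: yP => yP; rewrite xP // yP // subrr.
Qed.

Lemma card_hyper (F : finFieldType) n (z : 'rV[F]_n) : z != 0 ->
  (#|F| * #|[set xi | dotv xi z == 0%R]| <= #|F| ^ n)%N.
Proof.
move=> nz.
have [j zj] : exists j, z 0 j != 0.
  case: (pickP (fun j => z 0 j != 0)) => [j zj|H]; first by exists j.
  case/eqP: nz; apply/rowP => j; move: (H j) => /negbFE/eqP ->; by rewrite mxE.
pose x0 : 'rV[F]_n := (z 0 j)^-1 *: delta_mx 0 j.
have hx0 : dotv x0 z = 1.
  rewrite /dotv (bigD1 j) //= big1 => [|i ij].
    by rewrite !mxE !eqxx /= mulr1 mulVf // addr0.
  by rewrite !mxE (negbTE ij) andbF mulr0 mul0r.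
clearbody x0.
pose g (u : F * 'rV[F]_n) := u.2 + u.1 *: x0.
have ginj : {in setX [set: F] [set xi | dotv xi z == 0%R] &, injective g}.
  move=> [t k] [t' k']; rewrite !inE /= => /eqP k0 /eqP k0' e.
  have := congr1 (fun v => dotv v z) e; rewrite /g /= !dotvDl !dotvZl hx0 k0 k0'.
  rewrite !add0r !mulr1 => tt'; rewrite /g /= tt' in e; move/addIr: e => ke.
  by rewrite tt' ke.
have -> : (#|F| ^ n = #|{: 'rV[F]_n}|)%N by rewrite card_mx mul1n.
rewrite -[#|F|]cardsT -cardsX -(card_in_imset ginj).
exact: max_card.
Qed.


Lemma sum_pred1 (T : finType) (u : T) (g : T -> nat) :
  (\sum_t (u == t) * g t = g u)%N.
Proof.
rewrite (bigD1 u) //= eqxx mul1n big1 ?addn0 // => t tu.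
by rewrite eq_sym (negbTE tu).
Qed.

Lemma cs_nat (T : finType) (a : T -> nat) :
  ((\sum_t a t) ^ 2 <= #|T| * \sum_t a t ^ 2)%N.
Proof.
have e1 : ((\sum_t a t) ^ 2 = \sum_s \sum_t a s * a t)%N.
  by rewrite expnS expn1 big_distrl; apply: eq_bigr => s _; rewrite big_distrr.
have e2 : (\sum_s \sum_t (a s ^ 2 + a t ^ 2) = 2 * (#|T| * \sum_t a t ^ 2))%N.
  under eq_bigr do rewrite big_split /= sum_nat_const.
  rewrite big_split /= -big_distrr /= sum_nat_const.
  have hT : #|(fun _ : T => true)| = #|T| by [].
  rewrite hT.
  lia.
rewrite -(@leq_pmul2l 2) // -e2 e1 big_distrr; apply: leq_sum => s _.
rewrite big_distrr; apply: leq_sum => t _ /=; move: (a s) (a t) => u v; have [h _] := nat_AGM2 u v; move: h; rewrite sqrnD; lia.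
Qed.

Lemma coset_self (F : finFieldType) n (W : {vspace 'rV[F]_n}) x : x \in coset W x.
Proof. by rewrite inE subrr mem0v. Qed.

Lemma coset_eq (F : finFieldType) n (W : {vspace 'rV[F]_n}) a x :
  x \in coset W a -> coset W a = coset W x.
Proof.
rewrite inE => h; apply/setP => u; rewrite !inE.
have -> : u - a = (u - x) + (x - a) by rewrite addrA subrK.
by rewrite rpredDr.
Qed.

Lemma coset_inj (F : finFieldType) n (W W' : {vspace 'rV[F]_n}) a b :
  coset W a = coset W' b -> W = W'.
Proof.
move=> e; have : a \in coset W' b by rewrite -e coset_self.
rewrite inE => ab; apply/vspaceP => w.
have h1 : (a + w \in coset W a) = (w \in W) by rewrite inE addrC addKr.
by rewrite -h1 e inE addrAC addrC rpredDr.
Qed.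

Definition Acnt (F : finFieldType) n (W : {vspace 'rV[F]_n}) (E : {set 'rV[F]_n}) : nat :=
  (\sum_(x in E) \sum_(y in E) ((x - y)%R \in W))%N.

Lemma sum_cosets (F : finFieldType) n (W : {vspace 'rV[F]_n}) (E : {set 'rV[F]_n}) :
  (\sum_(V in [set coset W x | x : 'rV[F]_n]) #|E :&: V| ^ 2 = Acnt W E)%N.
Proof.
have hc V : #|E :&: V| = (\sum_(x in E) (x \in V))%N.
  rewrite -sum1_card (eq_bigl (fun x => (x \in E) && (x \in V))); last first.
    by move=> x; rewrite inE.
  by rewrite big_mkcondr; apply: eq_bigr => x _; case: (x \in V).
transitivity (\sum_(V in [set coset W x | x : 'rV[F]_n])
   \sum_(x in E) \sum_(y in E) ((x \in V) && (y \in V) : nat))%N.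
  apply: eq_bigr => V _; rewrite hc expnS expn1 big_distrl; apply: eq_bigr => x _.
  by rewrite big_distrr; apply: eq_bigr => y _; case: (x \in V); case: (y \in V).
rewrite exchange_big; apply: eq_bigr => x _; rewrite exchange_big; apply: eq_bigr => y _.
rewrite (bigD1 (coset W x)) /=; last by apply/imsetP; exists x.
rewrite coset_self /= big1 ?addn0; first by rewrite inE -opprB memvN.
move=> V /andP[/imsetP[a _ ->] ne].
case h : (x \in coset W a) => //=.
by rewrite (coset_eq h) eqxx in ne.
Qed.

Lemma mem_cosets_coll (F : finFieldType) n (G : seq {vspace 'rV[F]_n}) V :
  V \in cosets_coll G -> exists2 W, W \in G & exists a, V = coset W a.
Proof.
elim: G => [|W G IH]; rewrite /cosets_coll ?big_nil ?big_cons ?inE //.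
case/orP => [/imsetP[a _ ->]|/IH[W' W'G h]].
  by exists W; [rewrite inE eqxx | exists a].
by exists W'; [rewrite inE W'G orbT|].
Qed.

Lemma energy_eq (F : finFieldType) n (E : {set 'rV[F]_n}) (G : seq {vspace 'rV[F]_n}) :
  uniq G -> energy E (cosets_coll G) = (\sum_(W <- G) Acnt W E)%N.
Proof.
elim: G => [|W G IH] /=.
  by move=> _; rewrite /energy /cosets_coll big_nil big_set0 big_nil.
case/andP => WG uG; rewrite big_cons -IH // -sum_cosets /energy.
rewrite {1}/cosets_coll big_cons -/(cosets_coll G).
set B := [set coset W x | x : 'rV[F]_n].
have -> : (\sum_(V in B :|: cosets_coll G) #|E :&: V| ^ 2 =
   \sum_(V in [predU B & cosets_coll G]) #|E :&: V| ^ 2)%N.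
  by apply: eq_bigl => V; rewrite !inE.
rewrite bigU // disjoint_subset; apply/subsetP => V /imsetP[a _ ->].
rewrite inE; apply/negP => /mem_cosets_coll[W' W'G [b e]].
by move: WG; rewrite (coset_inj e) W'G.
Qed.


Definition Nc (F : finFieldType) n (E : {set 'rV[F]_n}) (xi : 'rV[F]_n) : nat :=
  (\sum_(x in E) \sum_(y in E) (dotv xi (x - y)%R == 0%R))%N.

Definition Dp (F : finFieldType) n (E : {set 'rV[F]_n}) (xi : 'rV[F]_n) : nat :=
  (#|F| * Nc E xi - #|E| ^ 2)%N.

Lemma card_cond (T : finType) (A : {pred T}) (P : pred T) :
  #|[set x in A | P x]| = (\sum_(x in A) P x)%N.
Proof.
rewrite -sum1_card (eq_bigl (fun x => (x \in A) && (P x))); last first.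
  by move=> x; rewrite inE.
by rewrite big_mkcondr; apply: eq_bigr => x _; case: (P x).
Qed.

Lemma Nc_cs (F : finFieldType) n (E : {set 'rV[F]_n}) xi :
  (#|E| ^ 2 <= #|F| * Nc E xi)%N.
Proof.
pose a t := (\sum_(x in E) (dotv xi x == t))%N.
have he : #|E| = (\sum_t a t)%N.
  rewrite -sum1_card /a exchange_big; apply: eq_bigr => x _.
  by rewrite -[LHS](sum_pred1 (dotv xi x) (fun _ => 1%N)); apply: eq_bigr => t _; rewrite muln1.
have hn : Nc E xi = (\sum_t a t ^ 2)%N.
  rewrite /Nc /a.
  under [RHS]eq_bigr do rewrite expnS expn1 big_distrl /=.
  under [RHS]eq_bigr do (under eq_bigr do rewrite big_distrr /=).
  rewrite [RHS]exchange_big; apply: eq_bigr => x _.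
  rewrite exchange_big; apply: eq_bigr => y _ /=.
  by rewrite sum_pred1 dotvBr subr_eq0 eq_sym.
by rewrite he hn; apply: cs_nat.
Qed.

Lemma Nc0 (F : finFieldType) n (E : {set 'rV[F]_n}) : Nc E 0 = (#|E| ^ 2)%N.
Proof.
rewrite /Nc; under eq_bigr do (under eq_bigr do rewrite dotv0l eqxx /=).
under eq_bigr do rewrite sum1_card.
by rewrite sum_nat_const expnS expn1.
Qed.

Lemma star (F : finFieldType) n (E : {set 'rV[F]_n}) (W : {vspace 'rV[F]_n}) :
  ((#|F| - 1) * #|Per W| * Acnt W E <=
    (#|F| - 1) * #|E| ^ 2 + \sum_(xi | xi != 0%R) (xi \in Per W) * Dp E xi)%N.
Proof.
set q := #|F|; set P := #|Per W|; set e := #|E|; set A := Acnt W E.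
pose c z := #|[set xi in Per W | dotv xi z == 0]|.
pose S := (\sum_(x in E) \sum_(y in E) c (x - y)%R)%N.
have i1 : (q * P * A + P * e ^ 2 <= q * S + P * A)%N.
  have eL : (q * S + P * A =
     \sum_(x in E) \sum_(y in E) (q * c (x - y)%R + P * ((x - y)%R \in W)))%N.
    rewrite /S /A /Acnt !big_distrr -big_split /=; apply: eq_bigr => x _.
    by rewrite !big_distrr -big_split.
  have eR : (q * P * A + P * e ^ 2 =
     \sum_(x in E) \sum_(y in E) (q * P * ((x - y)%R \in W) + P))%N.
    symmetry; under eq_bigr do rewrite big_split /= -big_distrr /= sum_nat_const.
    rewrite big_split /= -big_distrr /= sum_nat_const -/e.
    rewrite /A /Acnt !expnS expn0 muln1; congr (_ + _)%N; by rewrite mulnA mulnC.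
  rewrite eL eR; apply: leq_sum => x _; apply: leq_sum => y _.
  case hW : ((x - y)%R \in W) => /=.
    have -> : c (x - y)%R = P.
      rewrite /c /P; apply: eq_card => xi; rewrite in_set.
      case hx : (xi \in Per W) => //=.
      by move/PerP: hx => /(_ _ hW) ->; rewrite eqxx.
    by rewrite !muln1.
  by rewrite !muln0 !add0n addn0 card_Per_split.
have i2 : S = (\sum_(xi in Per W) Nc E xi)%N.
  rewrite /S /c /Nc; under eq_bigr do (under eq_bigr do rewrite card_cond).
  rewrite [RHS]exchange_big /=; apply: eq_bigr => x _.
  by rewrite exchange_big.
have i3 : (q * S = P * e ^ 2 + (q * e ^ 2 - e ^ 2) +
                   \sum_(xi | xi != 0%R) (xi \in Per W) * Dp E xi)%N.
  rewrite i2 big_distrr /=.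
  have -> : (\sum_(i in Per W) q * Nc E i = \sum_(i in Per W) (e ^ 2 + Dp E i))%N.
    by apply: eq_bigr => xi _; rewrite /Dp subnKC // Nc_cs.
  rewrite big_split /= sum_nat_const -/P -addnA; congr (_ + _)%N.
  rewrite (bigD1 0) /=; last by apply/PerP => w _; rewrite dotv0l.
  rewrite /Dp Nc0 -/e -/q; congr (_ + _)%N.
  rewrite big_mkcond [RHS]big_mkcond; apply: eq_bigr => xi _ /=.
  by case: (xi \in Per W); case: (xi != 0%R); rewrite /= ?mul1n ?mul0n.
have qpos : (0 < q)%N by rewrite /q; apply/card_gt0P; exists 0%R.
move: i1; rewrite i3.
set X := (\sum_(xi | xi != 0%R) _)%N.
have : (e ^ 2 <= q * e ^ 2)%N by rewrite leq_pmull.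
nia.
Qed.


Lemma dotv0r (F : fieldType) n (x : 'rV[F]_n) : dotv x 0 = 0.
Proof. by rewrite /dotv big1 // => i _; rewrite mxE mulr0. Qed.

Lemma sum_const_T (T : finType) (c : nat) : (\sum_(t : T) c)%N = (#|T| * c)%N.
Proof.
rewrite sum_nat_const.
have hT : #|(fun _ : T => true)| = #|T| by [].
by rewrite hT.
Qed.

Lemma sum_bool_count (T : Type) (P : pred T) (G : seq T) :
  (\sum_(W <- G) (P W : nat))%N = count P G.
Proof. by elim: G => [|W G IH]; rewrite ?big_nil ?big_cons ?IH. Qed.

Lemma sum_const_seq (T : Type) (G : seq T) (c : nat) :
  (\sum_(W <- G) c)%N = (size G * c)%N.
Proof. by elim: G => [|W G IH]; rewrite ?big_nil ?big_cons ?IH //= mulSn. Qed.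

Lemma partG (F : finFieldType) n m (E : {set 'rV[F]_n}) (G : seq {vspace 'rV[F]_n}) :
  (m <= n)%N -> (forall W, W \in G -> \dim W = (n - m)%N) ->
  ((#|F| - 1) * #|F| ^ m * \sum_(W <- G) Acnt W E <=
   (#|F| - 1) * size G * #|E| ^ 2 +
   \sum_(xi | xi != 0%R) count (fun W => xi \in Per W) G * Dp E xi)%N.
Proof.
move=> mn hG.
have qpos : (0 < #|F|)%N by apply/card_gt0P; exists 0%R.
apply: (@leq_trans (\sum_(W <- G) ((#|F| - 1) * #|E| ^ 2 +
          \sum_(xi | xi != 0%R) (xi \in Per W) * Dp E xi))%N).
  rewrite big_distrr /=; rewrite big_seq_cond [X in (_ <= X)%N]big_seq_cond.
  apply: leq_sum => W /andP[WG _].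
  apply: leq_trans (star E W); rewrite -!mulnA leq_mul2l; apply/orP; right.
  rewrite leq_mul2r; apply/orP; right.
  have := card_Per_ge W; rewrite (hG W WG).
  by rewrite -{1}(subnK mn) expnD leq_pmul2l // expn_gt0 qpos.
rewrite big_split /= sum_const_seq mulnA [(size G * _)%N]mulnC leq_add2l.
rewrite exchange_big /=; apply: leq_sum => xi _.
by rewrite -big_distrl /= sum_bool_count.
Qed.

Lemma h_card (F : finFieldType) n (z : 'rV[F]_n) :
  (\sum_(xi : 'rV[F]_n) (dotv xi z == 0%R))%N = #|[set xi | dotv xi z == 0%R]|.
Proof. by rewrite -sum1dep_card [RHS]big_mkcond; apply: eq_bigr => xi _; case: (_ == _). Qed.

Lemma partD (F : finFieldType) n (E : {set 'rV[F]_n}) :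
  (\sum_(xi | xi != 0%R) Dp E xi <= #|E| * #|F| ^ n.+1)%N.
Proof.
set q := #|F|; set e := #|E|.
have hall : (\sum_xi q * Nc E xi = q ^ n * e ^ 2 + \sum_xi Dp E xi)%N.
  have -> : (\sum_xi q * Nc E xi = \sum_xi (e ^ 2 + Dp E xi))%N.
    by apply: eq_bigr => xi _; rewrite /Dp subnKC // Nc_cs.
  by rewrite big_split /= sum_const_T card_mx mul1n.
have hsplit : (\sum_xi Dp E xi = Dp E 0 + \sum_(xi | xi != 0%R) Dp E xi)%N.
  by rewrite (bigD1 0%R).
have hub : (\sum_xi q * Nc E xi <= e * (q ^ n.+1 + e * q ^ n))%N.
  rewrite -big_distrr /= /Nc exchange_big /= big_distrr /=.
  apply: (@leq_trans (\sum_(x in E) (q ^ n.+1 + e * q ^ n))%N); last first.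
    by rewrite sum_nat_const.
  apply: leq_sum => x xE.
  rewrite exchange_big big_distrr /=.
  rewrite (bigD1 x) //= subrr.
  have -> : (\sum_(xi : 'rV[F]_n) (dotv xi 0 == 0%R))%N = (q ^ n)%N.
    transitivity (\sum_(xi : 'rV[F]_n) 1)%N.
      by apply: eq_bigr => xi _; rewrite dotv0r eqxx.
    by rewrite sum_const_T muln1 card_mx mul1n.
  rewrite expnS leq_add2l.
  rewrite /e -sum_nat_const [X in (_ <= X)%N](bigD1 x) //=; apply: (leq_trans _ (leq_addl _ _)).
  apply: leq_sum => y /andP[_ yx].
  rewrite h_card card_hyper // subr_eq0 eq_sym //.
move: hub; rewrite hall hsplit.
rewrite expnS; nia.
Qed.

Local Close Scope ring_scope.


Lemma part1_nat (F : finFieldType) n (E : {set 'rV[F]_n}) (G : seq {vspace 'rV[F]_n}) :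
  (\sum_(W <- G) Acnt W E =
   \sum_(x in E) (size G + \sum_(y in E | y != x) count (fun W : {vspace 'rV[F]_n} => (x - y)%R \in W) G))%N.
Proof.
rewrite /Acnt exchange_big /=; apply: eq_bigr => x xE.
rewrite exchange_big /= (bigD1 x) //=; congr (_ + _)%N.
  by rewrite sum_bool_count subrr (eq_count (a2 := predT)) ?count_predT // => W; rewrite mem0v.
by apply: eq_bigr => y _; rewrite sum_bool_count.
Qed.

Lemma sum1_le (T : finType) (E : {set T}) x :
  (\sum_(y in E | y != x) 1 <= #|E|)%N.
Proof.
rewrite -sum1_card.
case xE : (x \in E); first by rewrite [X in (_ <= X)%N](bigD1 x) //= leq_addl.
rewrite [X in (_ <= X)%N](eq_bigl (fun y => (y \in E) && (y != x))) //.
by move=> y; case yE : (y \in E) => //=; apply/esym/negP => /eqP yx; rewrite -yx yE in xE.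
Qed.

From Stdlib Require Import Reals Lra.

Lemma INR_sum_le (T : finType) (P : pred T) (f g : T -> nat) (B : R) :
  (forall i, P i -> INR (f i) <= B * INR (g i))%R ->
  (INR (\sum_(i | P i) f i) <= B * INR (\sum_(i | P i) g i))%R.
Proof.
move=> H.
apply: (big_rec2 (fun a b => INR a <= B * INR b)%R).
  simpl; lra.
move=> i a b Pi hab.
rewrite /addn plus_INR plus_INR.
have := H i Pi; lra.
Qed.

Lemma INR_expn (a k : nat) : INR (expn a k) = (INR a ^ k)%R.
Proof.
elim: k => [|k IH]; first by [].
by rewrite expnS mult_INR IH.
Qed.

Theorem lemma2p3 (n m : nat) (beta C1 C2 : R) :
  (2 <= n)%N -> (1 <= m)%N -> (m <= n - 1)%N -> (0 < beta)%R ->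
  (0 < C1)%R -> (0 <= C2)%R ->
  exists C : R, (0 <= C)%R /\
  forall (p : nat) (G : seq {vspace 'rV['F_p]_n}) (E : {set 'rV['F_p]_n}),
    prime p ->
    uniq G ->
    (forall W, W \in G -> \dim W = (n - m)%N) ->
    (INR (size G) >= C1 * Rpower (INR p) beta)%R ->
    ((forall xi : 'rV['F_p]_n, xi != GRing.zero ->
        (INR (count (fun W : {vspace 'rV['F_p]_n} => xi \in W) G)
           <= C2 * INR (size G) * Rpower (INR p) (- beta))%R) ->
      (INR (energy E (cosets_coll G))
         <= C * (INR #|E| * INR (size G)
                 + INR #|E| ^ 2 * INR (size G) * Rpower (INR p) (- beta)))%R)
    /\
    ((forall xi : 'rV['F_p]_n, xi != GRing.zero ->
        (INR (count (fun W : {vspace 'rV['F_p]_n} => xi \in Per W) G)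
           <= C2 * INR (size G) * Rpower (INR p) (- beta))%R) ->
      (INR (energy E (cosets_coll G))
         <= C * (Rpower (INR p) (- INR m) * INR (size G)
                 * (INR #|E| ^ 2
                    + INR #|E| * Rpower (INR p) (INR n - beta))))%R).
Proof.
move=> n2 m1 mn bpos C1pos C2pos.
exists (1 + 2 * C2)%R; split; first lra.
move=> p G E pr uG hdim hsize.
have p2 : (2 <= p)%N := prime_gt1 pr.
have pR : (2 <= INR p)%R.
  have := le_INR 2 p (ssrnat.leP p2); simpl; lra.
have hq : #|'F_p| = p := card_Fp pr.
have Bt0 : (0 < Rpower (INR p) (- beta))%R by rewrite /Rpower; apply: exp_pos.
have e0 := pos_INR #|E|.
have g0 := pos_INR (size G).
rewrite energy_eq //.
split.
- move=> H1.
  rewrite part1_nat.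
  set B := (C2 * INR (size G) * Rpower (INR p) (- beta))%R.
  have B0 : (0 <= B)%R by rewrite /B; apply: Rmult_le_pos; [apply: Rmult_le_pos|]; lra.
  have hx : forall x, x \in E ->
    (INR (size G + \sum_(y in E | y != x)
        count (fun W : {vspace 'rV['F_p]_n} => GRing.add x (GRing.opp y) \in W) G)
      <= (INR (size G) + B * INR #|E|) * INR 1)%R.
    move=> x xE; rewrite plus_INR /= Rmult_1_r.
    apply: Rplus_le_compat_l.
    apply: (Rle_trans _ (B * INR (\sum_(y in E | y != x) 1)%N)).
      apply: INR_sum_le => y /andP[_ yx]; rewrite /= Rmult_1_r.
      by apply: H1; rewrite GRing.subr_eq0 eq_sym.
    apply: Rmult_le_compat_l => //; apply: le_INR; apply/ssrnat.leP; exact: sum1_le.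
  apply: (Rle_trans _ _ _ (INR_sum_le hx)).
  rewrite sum1_card.
  rewrite /B.
  set a := INR #|E| in e0 *; set g := INR (size G) in g0 *; set b := Rpower (INR p) (- beta) in Bt0 *.
  have h1 : (0 <= C2 * (a * g))%R by apply: Rmult_le_pos => //; apply: Rmult_le_pos.
  have h3 : (0 <= a * a * g * b)%R.
    by apply: Rmult_le_pos; [apply: Rmult_le_pos; [apply: Rmult_le_pos|]|]; lra.
  have h2 : (0 <= C2 * (a * a * g * b))%R by apply: Rmult_le_pos.
  simpl; nra.
- move=> H2.
  have hm : (m <= n)%N by lia.
  have nat1 := partG E hm hdim; rewrite hq in nat1.
  have nat2 := partD E; rewrite hq in nat2.
  set B := (C2 * INR (size G) * Rpower (INR p) (- beta))%R.
  have B0 : (0 <= B)%R by rewrite /B; apply: Rmult_le_pos; [apply: Rmult_le_pos|]; lra.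
  have r1 : (INR (\sum_(xi | xi != GRing.zero)
       count (fun W : {vspace 'rV['F_p]_n} => xi \in Per W) G * Dp E xi)
       <= B * INR (\sum_(xi | xi != GRing.zero) Dp E xi))%R.
    apply: INR_sum_le => xi xi0; rewrite mult_INR.
    apply: Rmult_le_compat_r; first exact: pos_INR.
    exact: H2.
  have r2 := le_INR _ _ (ssrnat.leP nat2).
  have r3 := le_INR _ _ (ssrnat.leP nat1).
  rewrite plus_INR !mult_INR !INR_expn minus_INR in r3; last by apply/ssrnat.leP; lia.
  rewrite mult_INR INR_expn in r2.
  rewrite Rpower_Ropp Rpower_pow; last lra.
  rewrite /Rminus Rpower_plus Rpower_pow; last lra.
  set A := INR (\sum_(W <- G) Acnt W E) in r3 *.
  set M := (INR p ^ m)%R in r3 *.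
  set Pn := (INR p ^ n)%R in r2 *.
  have M0 : (0 < M)%R by rewrite /M; apply: pow_lt; lra.
  have Pn0 : (0 < Pn)%R by rewrite /Pn; apply: pow_lt; lra.
  have hPn1 : (INR p ^ n.+1 = INR p * Pn)%R by [].
  rewrite hPn1 in r2.
  simpl in r1; fold B in r1.
  set X := INR (\sum_(xi | xi != GRing.zero) Dp E xi) in r1 r2.
  set Y := INR (\sum_(xi | xi != GRing.zero) _) in r1 r3.
  simpl in r3.
  rewrite /B in r1 B0; clear B.
  set a := INR #|E| in e0 r2 r3 *; set g := INR (size G) in g0 r1 B0 r3 *.
  set b := Rpower (INR p) (- beta) in Bt0 r1 B0 *.
  set P := INR p in pR hPn1 r2 r3 *.
  have T0 : (0 <= g * a * Pn * b)%R.
    by apply: Rmult_le_pos; [apply: Rmult_le_pos; [apply: Rmult_le_pos|]|]; lra.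
  have K0 : (0 <= g * a * a)%R.
    by apply: Rmult_le_pos; [apply: Rmult_le_pos|]; lra.
  have s1 : (Y <= C2 * (g * a * Pn * b) * P)%R.
    apply: (Rle_trans _ _ _ r1).
    apply: (Rle_trans _ (C2 * g * b * (a * (P * Pn)))); first by apply: Rmult_le_compat_l.
    lra.
  have s2 : (C2 * (g * a * Pn * b) * P <= C2 * (g * a * Pn * b) * (2 * (P - 1)))%R.
    by apply: Rmult_le_compat_l; [apply: Rmult_le_pos|lra].
  have s3 : (M * A <= g * a * a + 2 * C2 * (g * a * Pn * b))%R.
    apply: (Rmult_le_reg_l (P - 1)); first lra.
    nra.
  apply: (Rmult_le_reg_l M) => //.
  have -> : (M * ((1 + 2 * C2) * (/ M * g * (a ^ 2 + a * (Pn * b))))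
     = (1 + 2 * C2) * (g * a * a + g * a * Pn * b))%R.
    field; lra.
  have h4 : (0 <= C2 * (g * a * a))%R by apply: Rmult_le_pos.
  nra.
Qed.
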